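(* Fix $q\in[0,1)$. For $\varepsilon\in(0,1-q)$ let $\mathcal{I}_1(\varepsilon)$ be the instance of the online volunteer notification problem with $V=1$, $S=2$, $T=2$, $g(\tau)=q(1-q)^{\tau-1}$ for $\tau\in\mathbb{N}$, arrival probabilities $\lambda_{1,1}=1$, $\lambda_{2,2}=\frac{\varepsilon}{1-q}$ (all other $\lambda_{s,t}=0$), and match probabilities $p_{1,1}=\varepsilon$, $p_{1,2}=1$. Then for every $\delta>0$ there exists $\varepsilon_0>0$ such that for all $\varepsilon\in(0,\varepsilon_0)$, every online policy completes in expectation at most $\left(\frac{1}{2-q}+\delta\right)\mathbf{LP}_{\mathcal{I}_1(\varepsilon)}$ tasks.
   Context: Online volunteer notification problem. An instance $\mathcal{I}$ consists of volunteers $[V]$, task types $[S]$, horizon $T$, arrival probabilities $\lambda_{s,t}\ge0$ with $\sum_s\lambda_{s,t}\le1$, match probabilities $p_{v,s}\in[0,1]$, and a probability mass function $g$ on the positive integers with CDF $G(\tau)=\sum_{i\le\tau}g(i)$, $G(0)=0$. In each period $t$ at most one task arrives, of type $s$ with probability $\lambda_{s,t}$, independently across periods. All volunteers start active. Upon an arrival the platform immediately and irrevocably notifies a subset of volunteers; each notified active volunteer $v$ responds positively independently with probability $p_{v,s}$; the task is completed iff at least one does. A volunteer active and notified at time $t$ becomes inactive (regardless of response) and active again at $t+Z$, $Z\sim g$ independent; inactive volunteers ignore notifications. An online policy decides whom to notify using only information available up to the current period. $\mathbf{LP}_{\mathcal{I}}=\max\sum_{t,s}\lambda_{s,t}\min\{\sum_vx_{v,s,t}p_{v,s},1\}$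 subject to $0\le x_{v,s,t}\le1$ and $\sum_{\tau=1}^t\sum_s\lambda_{s,\tau}x_{v,s,\tau}(1-G(t-\tau))\le1$ for all $v,t$. *)

(* Defs.v *)
From HB Require Import structures.
From mathcomp Require Import all_boot all_order all_algebra.
From mathcomp Require Import reals.
Set Implicit Arguments. Unset Strict Implicit. Unset Printing Implicit Defensive.
Import Order.TTheory GRing.Theory Num.Theory.
Local Open Scope ring_scope.

(* ---------- General online volunteer notification model ----------
   Volunteers are 'I_V, task types are 'I_S (type s+1 of the paper is s),
   periods are natural numbers 1..T.
   lam s t : arrival prob. of type s in period t;  pm v s : match prob.;
   g : pmf of the inactivity duration Z on positive integers (g 0 = 0). *)

Definition Gcdf (R : realType) (g : nat -> R) (tau : nat) : R :=
  \sum_(1 <= i < tau.+1) g i.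

(* What the platform observes in one period:
   (arrived type or None, set of active volunteers, notified set,
    set of volunteers that responded positively). *)
Definition event (V S : nat) :=
  (option 'I_S * {set 'I_V} * {set 'I_V} * {set 'I_V})%type.

(* A (randomized, behavioural) online policy: given the observed history of
   past periods, the type of the current arrival and the current set of
   active volunteers, a probability distribution over the set to notify. *)
Definition policy (R : realType) (V S : nat) :=
  seq (event V S) -> 'I_S -> {set 'I_V} -> {ffun {set 'I_V} -> R}.

Definition valid_policy (R : realType) (V S : nat) (pi : policy R V S) : Prop :=
  forall h s act, (forall A, 0 <= pi h s act A) /\ \sum_(A : {set 'I_V}) pi h s act A = 1.

(* Expected number of completed tasks in periods t, ..., t+n-1, starting from
   state [ret] (volunteer v is active in period u iff ret v <= u) and
   observed history [h].  The inactivity duration Z of a volunteer notified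
   at t only matters through its value when Z <= n-1 (it becomes active again
   at t+Z within the horizon); the event Z >= n (probability 1 - G(n-1)) is
   encoded by the index 0 and sends the volunteer to ret = t+n (inactive for
   the rest of the horizon). *)
Fixpoint value (R : realType) (V S : nat) (lam : 'I_S -> nat -> R)
  (pm : 'I_V -> 'I_S -> R) (g : nat -> R) (pi : policy R V S)
  (n t : nat) (ret : 'I_V -> nat) (h : seq (event V S)) {struct n} : R :=
  match n with
  | 0 => 0
  | n'.+1 =>
    let act := [set v | (ret v <= t)%N] in
    (1 - \sum_s lam s t) *
      value lam pm g pi n' t.+1 ret (rcons h (None, act, set0, set0))
    + \sum_s lam s t * \sum_(A : {set 'I_V}) pi h s act A *
      \sum_(B : {set 'I_V} | B \subset A :&: act)
        (\prod_(v in A :&: act) (if v \in B then pm v s else 1 - pm v s)) *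
        ((B != set0)%:R +
         \sum_(f : {ffun 'I_V -> 'I_n'.+1})
           (\prod_v (if v \in A :&: act then
                       (if f v == ord0 then 1 - Gcdf g n' else g (f v))
                     else (f v == ord0)%:R)) *
           value lam pm g pi n' t.+1
             (fun v => if v \in A :&: act then
                         (if f v == ord0 then (t + n)%N else (t + f v)%N)
                       else ret v)
             (rcons h (Some s, act, A, B)))
  end.

Definition expected_completed (R : realType) (V S T : nat)
  (lam : 'I_S -> nat -> R) (pm : 'I_V -> 'I_S -> R) (g : nat -> R)
  (pi : policy R V S) : R :=
  value lam pm g pi T 1 (fun _ => 0%N) [::].

Definition lp_feasible (R : realType) (V S T : nat)
  (lam : 'I_S -> nat -> R) (g : nat -> R) (x : 'I_V -> 'I_S -> nat -> R) : Prop :=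
  (forall v s t, (1 <= t <= T)%N -> 0 <= x v s t <= 1) /\
  (forall v t, (1 <= t <= T)%N ->
     \sum_(1 <= tau < t.+1) \sum_s lam s tau * x v s tau * (1 - Gcdf g (t - tau))
       <= 1).

Definition lp_obj (R : realType) (V S T : nat)
  (lam : 'I_S -> nat -> R) (pm : 'I_V -> 'I_S -> R)
  (x : 'I_V -> 'I_S -> nat -> R) : R :=
  \sum_(1 <= t < T.+1) \sum_s lam s t * Num.min (\sum_v x v s t * pm v s) 1.

Definition LP (R : realType) (V S T : nat)
  (lam : 'I_S -> nat -> R) (pm : 'I_V -> 'I_S -> R) (g : nat -> R) : R :=
  sup (fun r : R => exists x : 'I_V -> 'I_S -> nat -> R,
                 lp_feasible T lam g x /\ r = lp_obj T lam pm x).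

Definition lam1 (R : realType) (q eps : R) (s : 'I_2) (t : nat) : R :=
  if (val s == 0%N) && (t == 1%N) then 1
  else if (val s == 1%N) && (t == 2%N) then eps / (1 - q)
  else 0.

Definition p1 (R : realType) (eps : R) (v : 'I_1) (s : 'I_2) : R :=
  if val s == 0%N then eps else 1.

Definition geom (R : realType) (q : R) (tau : nat) : R :=
  if tau == 0%N then 0 else q * (1 - q) ^+ tau.-1.

(* Main.v *)
Require Import Defs.
From HB Require Import structures.
From mathcomp Require Import all_boot all_order all_algebra.
From mathcomp Require Import reals.
From mathcomp Require classical_sets.
From mathcomp Require Import ring lra.
Import Order.TTheory GRing.Theory Num.Theory.
Local Open Scope ring_scope.

Lemma sum_set1 (R : realType) (F : {set 'I_1} -> R) : \sum_(A : {set 'I_1}) F A = F set0 + F setT.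
Proof.
rewrite (bigD1 set0) //= (bigD1 setT) /=; last first.
  by apply/eqP => /setP /(_ ord0); rewrite !inE.
rewrite big_pred0 ?addr0 // => A; apply/negbTE; rewrite negb_and !negbK.
case: (boolP (ord0 \in A)) => h.
  by apply/orP; right; apply/eqP/setP => i; rewrite !inE ord1 h.
by apply/orP; left; apply/eqP/setP => i; rewrite !inE ord1 (negbTE h).
Qed.

Definition f0 : {ffun 'I_1 -> 'I_2} := [ffun => ord0].
Definition f1 : {ffun 'I_1 -> 'I_2} := [ffun => ord_max].

Lemma sum_ff (R : realType) (F : {ffun 'I_1 -> 'I_2} -> R) : \sum_f F f = F f0 + F f1.
Proof.
rewrite (bigD1 f0) //= (bigD1 f1) /=; last first.
  by apply/eqP => /ffunP /(_ ord0); rewrite !ffunE.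
rewrite big_pred0 ?addr0 // => f; apply/negbTE; rewrite negb_and !negbK.
case e: (f ord0) => [[|[|m]] hm] //.
  by apply/orP; left; apply/eqP/ffunP => i; rewrite !ffunE ord1 e; apply/val_inj.
by apply/orP; right; apply/eqP/ffunP => i; rewrite !ffunE ord1 e; apply/val_inj.
Qed.

Lemma value1 (R : realType) (q eps : R) (pi : policy R 1 2) (hv : valid_policy pi)
  (ret : 'I_1 -> nat) h (he : 0 < eps) (heq : eps < 1 - q) :
  value (lam1 q eps) (p1 eps) (geom q) pi 1 2 ret h <=
  (if (ret ord0 <= 2)%N then eps / (1 - q) else 0).
Proof.
rewrite /= mulr0 add0r big_ord_recl big_ord1 /lam1 /= mul0r add0r.
set c : R := (ret ord0 <= 2)%N%:R.
have -> : (if (ret ord0 <= 2)%N then eps / (1 - q) else 0) = eps / (1 - q) * c.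
  by rewrite /c; case: (ret ord0 <= 2)%N; rewrite ?mulr1 ?mulr0.
have hk : 0 <= eps / (1 - q) by apply: divr_ge0; rewrite ?ltW // (lt_trans he heq).
apply: ler_wpM2l => //.
set act := [set v | _].
apply: le_trans (_ : \sum_A pi h (lift ord0 ord0) act A * c <= c); last first.
  by rewrite -mulr_suml; case: (hv h (lift ord0 ord0) act) => _ ->; rewrite mul1r.
apply: ler_sum => A _; apply: ler_wpM2l; first by case: (hv h (lift ord0 ord0) act) => ->.
  have hz : forall (T : finType) (F : T -> R), \sum_(f : T) F f * 0 = 0.
    by move=> T F; rewrite big1 // => f _; rewrite mulr0.
  rewrite big_mkcond sum_set1 /= sub0set eqxx !hz !addr0 mulr0 add0r.
  case: ifP => [hs|_]; last by rewrite /c ler0n.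
  have hin : ord0 \in act by move/subsetP: hs => /(_ ord0); rewrite !inE => /(_ isT) /andP [].
  have -> : (setT == set0 :> {set 'I_1}) = false.
    by apply/negbTE/eqP => /setP /(_ ord0); rewrite !inE.
  rewrite /c; move: hin; rewrite inE => ->.
  rewrite mulr1 big1 // => v _; by rewrite inE /p1.
Qed.

Lemma valueS (R : realType) (V S : nat) (lam : 'I_S -> nat -> R)
  (pm : 'I_V -> 'I_S -> R) (g : nat -> R) (pi : policy R V S)
  (n' t : nat) (ret : 'I_V -> nat) (h : seq (event V S)) :
  value lam pm g pi n'.+1 t ret h =
    let act := [set v | (ret v <= t)%N] in
    (1 - \sum_s lam s t) *
      value lam pm g pi n' t.+1 ret (rcons h (None, act, set0, set0))
    + \sum_s lam s t * \sum_(A : {set 'I_V}) pi h s act A *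
      \sum_(B : {set 'I_V} | B \subset A :&: act)
        (\prod_(v in A :&: act) (if v \in B then pm v s else 1 - pm v s)) *
        ((B != set0)%:R +
         \sum_(f : {ffun 'I_V -> 'I_n'.+1})
           (\prod_v (if v \in A :&: act then
                       (if f v == ord0 then 1 - Gcdf g n' else g (f v))
                     else (f v == ord0)%:R)) *
           value lam pm g pi n' t.+1
             (fun v => if v \in A :&: act then
                         (if f v == ord0 then (t + n'.+1)%N else (t + f v)%N)
                       else ret v)
             (rcons h (Some s, act, A, B))).
Proof. by []. Qed.

Lemma setI1 (A : {set 'I_1}) : A = set0 \/ A = setT.
Proof.
case: (boolP (ord0 \in A)) => h; [right|left]; apply/setP => i; rewrite !inE ord1 //.
exact: negbTE.
Qed.

Arguments value : simpl never.
Lemma value2 (R : realType) (q eps : R) (hq : 0 <= q < 1) (pi : policy R 1 2) (hv : valid_policy pi)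
  (he : 0 < eps) (heq : eps < 1 - q) :
  value (lam1 q eps) (p1 eps) (geom q) pi 2 1 (fun _ => 0%N) [::] <= eps / (1 - q).
Proof.
have hk : 0 <= eps / (1 - q) by apply: divr_ge0; rewrite ?ltW // (lt_trans he heq).
have hv1 : forall ret h, value (lam1 q eps) (p1 eps) (geom q) pi 1 2 ret h <= eps / (1 - q).
  by move=> ret h; apply: le_trans (@value1 _ q eps pi hv ret h he heq) _ => //; case: ifP.
have hv0 : forall ret h, (2 < ret ord0)%N -> value (lam1 q eps) (p1 eps) (geom q) pi 1 2 ret h <= 0.
  by move=> ret h hr; apply: le_trans (@value1 _ q eps pi hv ret h he heq) _ => //; rewrite leqNgt hr.
rewrite valueS; cbv zeta.
rewrite big_ord_recl big_ord1 big_ord_recl big_ord1.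
have -> : lam1 q eps ord0 1 = 1 by [].
have -> : lam1 q eps (lift ord0 ord0) 1 = 0 by [].
rewrite addr0 subrr mul0r add0r.
rewrite mul0r addr0 mul1r.
set act := [set v | _].
have -> : act = setT by apply/setP => v; rewrite !inE.
apply: le_trans (_ : \sum_A pi [::] ord0 setT A * (eps / (1 - q)) <= eps / (1 - q)); last first.
  by rewrite -mulr_suml; case: (hv [::] ord0 setT) => _ ->; rewrite mul1r.
apply: ler_sum => A _; apply: ler_wpM2l; first by case: (hv [::] ord0 setT) => ->.
case: (setI1 A) => ->.
  rewrite big_mkcond sum_set1 /=.
  rewrite !big_mkcond /= !sum_ff !big_ord1 !inE /= sub0set.
  case: ifP => [/subsetP/(_ ord0)|_]; first by rewrite !inE => /(_ isT).
  rewrite eqxx /f0 /f1 !ffunE eqxx /= mul1r mul0r !addr0 add0r mul1r.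
  exact: hv1.
rewrite big_mkcond sum_set1 /=.
rewrite !big_mkcond /= !sum_ff !big_ord1 !inE /= sub0set.
have -> : (f1 ord0 == ord0) = false by rewrite /f1 ffunE.
have -> : Gcdf (geom q) 1 = q by rewrite /Gcdf big_nat1 /geom /= expr0 mulr1.
have -> : p1 eps ord0 ord0 = eps by [].
have -> : geom q (f1 ord0) = q by rewrite /f1 ffunE /geom /= expr0 mulr1.
rewrite (_ : (_ \subset _) = true); last by apply/subsetP => v; rewrite !inE.
rewrite eqxx.
rewrite (_ : (_ != set0) = true); last by apply/eqP => /setP /(_ ord0); rewrite !inE.
rewrite big_mkcond big_ord1 !inE /=.
have -> : (f0 ord0 == ord0) = true by rewrite /f0 ffunE.
have -> : p1 eps ord0 ord0 = eps by [].
have fin : forall x0 y0 x1 y1 : R, x0 <= 0 -> y0 <= eps / (1 - q) -> x1 <= 0 -> y1 <= eps / (1 - q) ->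
  (1 - eps) * (0 + ((1 - q) * x0 + q * y0)) + eps * (1 + ((1 - q) * x1 + q * y1)) <= eps / (1 - q).
  move=> x0 y0 x1 y1 h0 h1 h2 h3.
  case/andP: hq => hq0 hq1.
  have hkq : eps / (1 - q) * (1 - q) = eps by rewrite mulfVK // subr_eq0; apply/eqP => e; move: hq1; rewrite -e ltxx.
  have : q * y0 <= q * (eps / (1 - q)) by apply: ler_wpM2l.
  have : q * y1 <= q * (eps / (1 - q)) by apply: ler_wpM2l.
  have : (1 - q) * x0 <= 0 by apply: mulr_ge0_le0; rewrite // subr_ge0 ltW.
  have : (1 - q) * x1 <= 0 by apply: mulr_ge0_le0; rewrite // subr_ge0 ltW.
  move: hkq; set k := eps / (1 - q); nra.
apply: fin; [apply: hv0 | apply: hv1 | apply: hv0 | apply: hv1]; by rewrite !inE /f0 ffunE.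
Qed.

Lemma obj_expand (R : realType) (q eps : R) (x : 'I_1 -> 'I_2 -> nat -> R) :
  lp_obj 2 (lam1 q eps) (p1 eps) x =
  Num.min (x ord0 ord0 1%N * eps) 1 + eps / (1 - q) * Num.min (x ord0 ord_max 2%N) 1.
Proof.
rewrite /lp_obj big_nat_recr //= big_nat1 !big_ord_recl !big_ord0 /=.
have -> : lift ord0 ord0 = ord_max :> 'I_2 by apply/val_inj.
have -> : lam1 q eps ord0 1 = 1 by [].
have -> : lam1 q eps ord_max 1 = 0 by [].
have -> : lam1 q eps ord0 2 = 0 by [].
have -> : lam1 q eps ord_max 2 = eps / (1 - q) by [].
have -> : p1 eps ord0 ord0 = eps by [].
have -> : p1 eps ord0 ord_max = 1 by [].
by rewrite !addr0 mul1r !mul0r !add0r addr0 mulr1.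
Qed.

Lemma feas (R : realType) (q eps : R) (hq : 0 <= q < 1) (he : 0 < eps) (heq : eps < 1 - q) :
  lp_feasible 2 (lam1 q eps) (geom q)
    (fun (v : 'I_1) (s : 'I_2) (t : nat) => if val s == 0%N then 1 - eps / (1 - q) else 1).
Proof.
case/andP: hq => hq0 hq1.
have h1q : 0 < 1 - q by rewrite subr_gt0.
have hk0 : 0 <= eps / (1 - q) by apply: divr_ge0; rewrite ltW.
have hk1 : eps / (1 - q) < 1 by rewrite ltr_pdivrMr // mul1r.
split.
  move=> v s t _; case: ifP => _; apply/andP; split; lra.
have G0 : Gcdf (geom q) 0 = 0 by rewrite /Gcdf big_geq.
have G1 : Gcdf (geom q) 1 = q by rewrite /Gcdf big_nat1 /geom /= expr0 mulr1.
have L01 : lam1 q eps ord0 1 = 1 by [].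
have L11 : lam1 q eps ord_max 1 = 0 by [].
have L02 : lam1 q eps ord0 2 = 0 by [].
have L12 : lam1 q eps ord_max 2 = eps / (1 - q) by [].
move=> v [|[|[|t]]] //= _.
  rewrite big_nat1 !big_ord_recl big_ord0 /= subnn G0.
  have -> : lift ord0 ord0 = ord_max :> 'I_2 by apply/val_inj.
  rewrite L01 L11. lra.
rewrite big_nat_recr //= big_nat1 !big_ord_recl !big_ord0 /=.
have -> : lift ord0 ord0 = ord_max :> 'I_2 by apply/val_inj.
have -> : (2 - 1 = 1)%N by [].
rewrite subnn G0 G1 L01 L11 L02 L12.
set k := eps / (1 - q) in hk0 hk1 *.
have : 0 <= (1 - k) * q by apply: mulr_ge0; lra.
nra.
Qed.

Theorem lemma4 (R : realType) (q : R) (hq : 0 <= q < 1) :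
  forall delta : R, 0 < delta ->
  exists eps0 : R, 0 < eps0 /\
    forall eps : R, 0 < eps -> eps < eps0 -> eps < 1 - q ->
    forall pi : policy R 1 2, valid_policy pi ->
      expected_completed 2 (lam1 q eps) (p1 eps) (geom q) pi
      <= (1 / (2 - q) + delta) * LP 2 (lam1 q eps) (p1 eps) (geom q).
Proof.
move=> delta hd; exists delta; split => // eps he he0 heq pi hv.
have hval := @value2 R q eps hq pi hv he heq.
rewrite /expected_completed.
case/andP: hq => hq0 hq1.
have h1q : 0 < 1 - q by rewrite subr_gt0.
have hk0 : 0 <= eps / (1 - q) by apply: divr_ge0; rewrite ltW.
have hk1 : eps / (1 - q) < 1 by rewrite ltr_pdivrMr // mul1r.
have hkq : eps / (1 - q) * (1 - q) = eps by rewrite mulfVK // gt_eqF.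
pose E := fun r : R => exists x : 'I_1 -> 'I_2 -> nat -> R,
  lp_feasible 2 (lam1 q eps) (geom q) x /\ r = lp_obj 2 (lam1 q eps) (p1 eps) x.
set x := (fun (v : 'I_1) (s : 'I_2) (t : nat) => if val s == 0%N then 1 - eps / (1 - q) else 1).
have hEL : E (lp_obj 2 (lam1 q eps) (p1 eps) x).
  by exists x; split => //; apply: feas => //; apply/andP.
have hobj : lp_obj 2 (lam1 q eps) (p1 eps) x = (1 - eps / (1 - q)) * eps + eps / (1 - q).
  rewrite obj_expand /x /= min_l; last by rewrite mulr_ile1 //; lra.
  by rewrite min_l // mulr1.
have hsup : classical_sets.has_sup E.
  split; first by exists (lp_obj 2 (lam1 q eps) (p1 eps) x).
  exists (1 + eps / (1 - q)) => r [y [_ ->]].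
  rewrite obj_expand; apply: lerD; first by rewrite ge_min lexx orbT.
  by rewrite ler_piMr // ge_min lexx orbT.
have hL := sup_upper_bound hsup hEL.
rewrite hobj in hL.
change (LP 2 (lam1 q eps) (p1 eps) (geom q)) with (sup E).
set k := eps / (1 - q) in hval hk0 hk1 hkq hL *.
set d := 1 / (2 - q).
have h2q : 0 < 2 - q by lra.
have hd1 : d * (2 - q) = 1 by rewrite /d mul1r mulVf // gt_eqF.
have hd0 : 0 < d by rewrite /d divr_gt0.
have hdle : d <= 1 by rewrite /d ler_pdivrMr // mul1r; lra.
apply: le_trans hval _.
apply: le_trans (_ : (d + delta) * ((1 - k) * eps + k) <= _); last first.
  by apply: ler_wpM2l => //; lra.
have hA : k * d * eps <= k * eps.
  by rewrite -mulrA ler_wpM2l // ler_piMl // ltW.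
have hB : k * eps <= k * delta by apply: ler_wpM2l => //; apply: ltW.
have hC : k * delta <= k * delta * (2 - q - eps).
  rewrite ler_peMr. lra. exact: mulr_ge0 hk0 (ltW hd). lra.
have hD : k * d * (2 - q) = k by rewrite -mulrA hd1 mulr1.
nra.
Qed.
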